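(* Consider a dynamic finite set $S$ with a function $f:S\to\mathbb{Z}_{\ge0}$ that is modified only by the following restricted operations: insert a new element $x$ with $f(x)=0$; delete an element $x$ with $f(x)=0$; increment $f(x)$ by $1$ for some $x\in S$; decrement $f(x)$ by $1$ for some $x\in S$ with $f(x)\ge1$. If, over some contiguous sequence of such operations, the $h$-index of $S$ and $f$ changes from $h$ (before the sequence) to $h'>h$ (after the sequence), then the sequence contains at least $(h'-h)^2$ increment operations.
   Context: For a finite set $S$ and $f:S\to\mathbb{Z}_{\ge0}$, the $h$-index of $S$ and $f$ is the largest integer $h\ge 0$ such that there is a subset $H\subseteq S$ with $|H|=h$ and $f(x)\ge h$ for all $x\in H$. *)

(* Defs.v *)
From mathcomp Require Import all_boot.
Set Implicit Arguments. Unset Strict Implicit. Unset Printing Implicit Defensive.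

(* A state is a finite set S of elements of an eqType T, represented as a
   duplicate-free sequence, together with f : T -> nat (only its values on S
   matter). *)

Definition hindex_witness (T : eqType) (S : seq T) (f : T -> nat) (h : nat) : Prop :=
  exists H : seq T, [/\ uniq H, {subset H <= S}, size H = h & forall x, x \in H -> h <= f x].

Definition is_hindex (T : eqType) (S : seq T) (f : T -> nat) (h : nat) : Prop :=
  hindex_witness S f h /\ forall k, hindex_witness S f k -> k <= h.

Inductive opkind := OIns | ODel | OInc | ODec.

Definition is_inc (k : opkind) : bool := if k is OInc then true else false.

Inductive step (T : eqType) : seq T -> (T -> nat) -> opkind -> seq T -> (T -> nat) -> Prop :=
| step_ins S f f' x :
    x \notin S -> f' x = 0 -> (forall y, y \in S -> f' y = f y) ->
    step S f OIns (x :: S) f'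
| step_del S f f' x :
    x \in S -> f x = 0 -> (forall y, y \in rem x S -> f' y = f y) ->
    step S f ODel (rem x S) f'
| step_inc S f f' x :
    x \in S -> f' x = (f x).+1 -> (forall y, y \in S -> y != x -> f' y = f y) ->
    step S f OInc S f'
| step_dec S f f' x :
    x \in S -> 1 <= f x -> f' x = (f x).-1 -> (forall y, y \in S -> y != x -> f' y = f y) ->
    step S f ODec S f'.

Inductive run (T : eqType) : seq T -> (T -> nat) -> seq opkind -> seq T -> (T -> nat) -> Prop :=
| run_nil S f : run S f [::] S f
| run_cons S f k S' f' ops S'' f'' :
    step S f k S' f' -> run S' f' ops S'' f'' -> run S f (k :: ops) S'' f''.

(* Main.v *)
Require Import Defs.
From mathcomp Require Import all_boot.

Set Implicit Arguments. Unset Strict Implicit.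

Definition gv (T : eqType) (S : seq T) (f : T -> nat) (x : T) : nat :=
  if x \in S then f x else 0.

Arguments gv {T}.

Lemma step_gv (T : eqType) S f k S' f' :
  @step T S f k S' f' ->
  exists y : T, forall x : T, gv S' f' x <= gv S f x + (is_inc k && (x == y)).
Proof.
case=> {S f k S' f'}.
- move=> S f f' x xS fx Hf; exists x => y; rewrite /gv in_cons.
  case: (eqVneq y x) => [->|nyx] /=; first by rewrite fx.
  by case: ifP => // yS; rewrite Hf // addn0.
- move=> S f f' x xS fx Hf; exists x => y; rewrite /gv /= addn0.
  case: ifP => // yS; rewrite Hf //.
  by have -> : y \in S by move: yS; apply: mem_rem.
- move=> S f f' x xS fx Hf; exists x => y; rewrite /gv /=.
  case: (eqVneq y x) => [->|nyx]; first by rewrite xS fx addn1.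
  by case: ifP => // yS; rewrite Hf // addn0.
- move=> S f f' x xS fx1 fx Hf; exists x => y; rewrite /gv /= addn0.
  case: (eqVneq y x) => [->|nyx]; first by rewrite xS fx leq_pred.
  by case: ifP => // yS; rewrite Hf.
Qed.

Lemma sumn_le (T : eqType) (X : seq T) (a b : T -> nat) :
  (forall x, a x <= b x) -> sumn (map a X) <= sumn (map b X).
Proof. by move=> H; elim: X => //= x X IH; rewrite leq_add. Qed.

Lemma sumn_ind (T : eqType) (X : seq T) (y : T) :
  uniq X -> sumn (map (fun x => nat_of_bool (x == y)) X) <= 1.
Proof.
elim: X => //= x X IH /andP [xX uX].
case: (eqVneq x y) => [exy|_] /=; last by rewrite add0n IH.
subst x; suff -> : sumn (map (fun x => nat_of_bool (x == y)) X) = 0 by [].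
elim: X xX {IH uX} => //= z X IH; rewrite in_cons negb_or => /andP [zy zX].
by rewrite eq_sym (negbTE zy) IH.
Qed.

Lemma sumn_le_in (T : eqType) (X : seq T) (a b : T -> nat) :
  (forall x, x \in X -> a x <= b x) -> sumn (map a X) <= sumn (map b X).
Proof.
elim: X => //= x X IH H; rewrite leq_add ?H ?mem_head //.
by apply: IH => y yX; apply: H; rewrite in_cons yX orbT.
Qed.

Lemma sumn_add (T : eqType) (X : seq T) (a b : T -> nat) :
  sumn (map (fun x => a x + b x) X) = sumn (map a X) + sumn (map b X).
Proof. elim: X => //= x X ->; by rewrite addnACA. Qed.

Lemma sumn_const (T : eqType) (X : seq T) c :
  sumn (map (fun _ => c) X) = size X * c.
Proof. by elim: X => //= x X ->; rewrite mulSn. Qed.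

Lemma run_psi (T : eqType) (X : seq T) S f ops S' f' :
  uniq X -> @run T S f ops S' f' ->
  sumn (map (gv S' f') X) <= sumn (map (gv S f) X) + count is_inc ops.
Proof.
move=> uX; elim=> {S f ops S' f'} [S f|S f k S' f' ops S'' f'' st _ IH] /=.
  by rewrite addn0.
apply: (leq_trans IH); rewrite addnA leq_add2r.
have [y Hy] := step_gv st.
have := @sumn_le _ X _ _ Hy; rewrite sumn_add => /leq_trans; apply; rewrite leq_add2l.
case: (is_inc k) => /=; last by rewrite sumn_const muln0.
exact: sumn_ind.
Qed.

Theorem lemma1 (T : eqType) (S0 : seq T) (f0 : T -> nat) (ops : seq opkind)
  (S1 : seq T) (f1 : T -> nat) (h h' : nat) :
  uniq S0 ->
  run S0 f0 ops S1 f1 ->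
  is_hindex S0 f0 h -> is_hindex S1 f1 h' -> h < h' ->
  (h' - h) ^ 2 <= count is_inc ops.
Proof.
move=> _ R [_ Hmax] [[H [uH sH szH fH]] _] hh.
pose X := [seq x <- H | gv S0 f0 x <= h].
pose Y := [seq x <- H | ~~ (gv S0 f0 x <= h)].
have szY : size Y <= h.
  rewrite leqNgt; apply/negP => hY.
  suff : h.+1 <= h by rewrite ltnn.
  apply: Hmax.
  exists (take h.+1 Y); split.
  - by apply: take_uniq; apply: filter_uniq.
  - move=> x /mem_take; rewrite mem_filter /gv => /andP [].
    by case: ifP.
  - by rewrite size_takel.
  - move=> x /mem_take; rewrite mem_filter /gv -ltnNge => /andP [].
    by case: ifP.
have szXY : size X + size Y = h'.
  by rewrite !size_filter count_predC szH.
have szX : h' - h <= size X.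
  by rewrite leq_subLR -szXY addnC leq_add2r.
have uX : uniq X by apply: filter_uniq.
have P := run_psi uX R.
have low : size X * h' <= sumn (map (gv S1 f1) X).
  rewrite -sumn_const; apply: sumn_le_in => x.
  rewrite mem_filter => /andP [_ xH]; rewrite /gv (sH _ xH); exact: fH.
have high : sumn (map (gv S0 f0) X) <= size X * h.
  rewrite -sumn_const; apply: sumn_le_in => x.
  by rewrite mem_filter => /andP [].
have : size X * (h' - h) <= count is_inc ops.
  rewrite mulnBr leq_subLR.
  apply: (leq_trans low); apply: (leq_trans P).
  by rewrite leq_add2r.
apply: leq_trans; rewrite expnS expn1 leq_mul2r szX orbT //.
Qed.
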